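(* Let $f:X\to Y$ be a surjective continuous mapping with $X$ locally Menger. If $f$ is weakly perfect, or if $f$ is bi-quotient, then $Y$ is locally Menger.
   Context: A space $X$ is Menger if for each sequence $(\mathcal{U}_n)$ of open covers of $X$ there is a sequence $(\mathcal{V}_n)$ with each $\mathcal{V}_n$ a finite subset of $\mathcal{U}_n$ and $\bigcup_{n}\bigcup\mathcal{V}_n=X$. A space $X$ is locally Menger if for each $x\in X$ there exist an open set $U$ and a Menger subspace $Y$ of $X$ with $x\in U\subseteq Y$. A surjective continuous map $f:X\to Y$ is weakly perfect if $f$ is closed and $f^{-1}(y)$ is Lindelöf for every $y\in Y$. A surjective continuous map $f:X\to Y$ is bi-quotient if whenever $y\in Y$ and $\mathcal{U}$ is a cover of $f^{-1}(y)$ by open subsets of $X$, there are finitely many $U\in\mathcal{U}$ whose images $f(U)$ cover some open set of $Y$ containing $y$. *)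

(* Defs.v *)
From HB Require Import structures.
From mathcomp Require Import all_boot all_order.
From mathcomp Require Import boolp classical_sets functions cardinality topology.
Set Implicit Arguments. Unset Strict Implicit. Unset Printing Implicit Defensive.
Local Open Scope classical_set_scope.

Definition open_cover_of {T : topologicalType} (A : set T) (U : set (set T)) :=
  (forall u, U u -> open u) /\ A `<=` \bigcup_(u in U) u.

(* The subspace A of T is Menger (covers by open sets of T, equivalently of the
   subspace A). *)
Definition Menger_subspace {T : topologicalType} (A : set T) : Prop :=
  forall U : nat -> set (set T), (forall n, open_cover_of A (U n)) ->
  exists V : nat -> set (set T),
    (forall n, finite_set (V n) /\ V n `<=` U n) /\
    A `<=` \bigcup_(n in [set: nat]) \bigcup_(u in V n) u.

Definition Menger_space (T : topologicalType) : Prop := Menger_subspace [set: T].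

Definition locally_Menger (T : topologicalType) : Prop :=
  forall x : T, exists (U Y : set T),
    open U /\ Menger_subspace Y /\ U x /\ U `<=` Y.

Definition Lindelof_subspace {T : topologicalType} (A : set T) : Prop :=
  forall U : set (set T), open_cover_of A U ->
  exists V : set (set T), countable V /\ V `<=` U /\ open_cover_of A V.

Definition closed_map {X Y : topologicalType} (f : X -> Y) : Prop :=
  forall C : set X, closed C -> closed (f @` C).

Definition surjective_map {X Y : Type} (f : X -> Y) : Prop :=
  forall y : Y, exists x : X, f x = y.

Definition weakly_perfect {X Y : topologicalType} (f : X -> Y) : Prop :=
  [/\ surjective_map f, continuous f, closed_map f &
      forall y : Y, Lindelof_subspace (f @^-1` [set y])].

Definition bi_quotient {X Y : topologicalType} (f : X -> Y) : Prop :=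
  [/\ surjective_map f, continuous f &
    forall (y : Y) (U : set (set X)), open_cover_of (f @^-1` [set y]) U ->
    exists (V : set (set X)) (W : set Y),
      [/\ finite_set V, V `<=` U, open W, W y &
          W `<=` \bigcup_(u in V) (f @` u)]].

(* Main.v *)
Require Import Defs.
From mathcomp Require Import all_boot all_order.
From mathcomp Require Import boolp classical_sets functions cardinality topology.
Local Open Scope classical_set_scope.

Lemma Menger_set0 (T : topologicalType) : Menger_subspace (@set0 T).
Proof.
move=> U _; exists (fun _ => set0); split => //.
by move=> n; split; [exact: finite_set0| move=> u].
Qed.

Lemma Menger_seq_union (T : topologicalType) (M : nat -> set T) :
  (forall k, Menger_subspace (M k)) ->
  Menger_subspace (\bigcup_(k in [set: nat]) M k).
Proof.
move=> HM U HU.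
have Hk : forall k, exists W : nat -> set (set T),
    (forall n, finite_set (W n) /\ W n `<=` U (n + k)%N) /\
    M k `<=` \bigcup_(n in [set: nat]) \bigcup_(u in W n) u.
  move=> k; apply: HM => n; have [Ho Hc] := HU (n + k)%N; split => //.
  by move=> x Mx; apply: Hc; exists k.
have [W HW] := choice Hk.
exists (fun m => \bigcup_(k in `I_m.+1) W k (m - k)%N); split.
  move=> m; split.
    apply: bigcup_finite; first exact: finite_II.
    by move=> k _; have [/(_ (m - k)%N) [] ] := HW k.
  move=> u [k /= km Wu]; have [/(_ (m - k)%N) [_ Hs] _] := HW k.
  by have := Hs _ Wu; rewrite subnK.
move=> x [k _ Mx]; have [_ Hc] := HW k.
have [n _ [u Wu ux]] := Hc _ Mx.
exists (n + k)%N => //; exists u => //; exists k => /=; first by rewrite ltnS leq_addl.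
by rewrite addnK.
Qed.


Lemma Menger_image (X Y : topologicalType) (f : X -> Y) (A : set X) :
  continuous f -> Menger_subspace A -> Menger_subspace (f @` A).
Proof.
move=> cf HA U HU.
have HU' : forall n, open_cover_of A [set f @^-1` u | u in U n].
  move=> n; have [Ho Hc] := HU n; split.
    move=> _ [u Uu <-]; apply: open_comp; last exact: Ho.
    by move=> x _; apply: cf.
  move=> x Ax; have [u Uu ufx] := Hc (f x) (ex_intro2 _ _ x Ax erefl).
  by exists (f @^-1` u) => //; exists u.
have [V' [HV'1 HV'2]] := HA _ HU'.
have Hh : forall p : nat * set X, exists u,
    [set f @^-1` u | u in U p.1] p.2 -> U p.1 u /\ p.2 = f @^-1` u.
  move=> [n v] /=; have [[u Uu <-]|N] := EM ([set f @^-1` u | u in U n] v).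
    by exists u.
  by exists set0.
have [h Hh'] := choice Hh.
exists (fun n => (fun v => h (n, v)) @` V' n); split.
  move=> n; have [Fn Sn] := HV'1 n; split; first exact: finite_image.
  by move=> _ [v Vv <-]; have [] := Hh' (n, v) (Sn _ Vv).
move=> _ [x Ax <-]; have [n _ [v Vv vx]] := HV'2 x Ax.
have [_ Hv] := HV'1 n; have [_ E] := Hh' (n, v) (Hv _ Vv).
exists n => //; exists (h (n, v)); first by exists v.
have E' : v = f @^-1` h (n, v) := E.
by move: vx; rewrite {1}E'.
Qed.

Lemma key (X Y : topologicalType) (f : X -> Y) (V : set (set X)) :
  continuous f -> countable V ->
  (forall u, V u -> exists M, Menger_subspace M /\ u `<=` M) ->
  exists Z, Menger_subspace Z /\ f @` (\bigcup_(u in V) u) `<=` Z.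
Proof.
move=> cf /countable_injP [g gi] HV.
have Hk : forall k : nat, exists M, Menger_subspace M /\
    (forall u, V u -> g u = k -> u `<=` M).
  move=> k; have [[u [Vu gu]]|N] := EM (exists u, V u /\ g u = k).
    have [M [MM uM]] := HV u Vu; exists M; split => // u' Vu' gu'.
    have -> : u' = u by apply: gi; rewrite ?inE // gu gu'.
    by [].
  exists set0; split; first exact: Menger_set0.
  by move=> u Vu gu; exfalso; apply: N; exists u.
have [M HM] := choice Hk.
exists (f @` \bigcup_(k in [set: nat]) M k); split.
  apply: Menger_image => //; apply: Menger_seq_union => k; by have [] := HM k.
move=> _ [x [u Vu ux] <-]; exists x => //; exists (g u) => //.
by have [_ H] := HM (g u); apply: (H u).
Qed.

Theorem theorem4p1 (X Y : topologicalType) (f : X -> Y) :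
  surjective_map f -> continuous f -> locally_Menger X ->
  (weakly_perfect f \/ bi_quotient f) -> locally_Menger Y.
Proof.
move=> sf cf lM H y.
pose P := [set u : set X | open u /\ exists M, Menger_subspace M /\ u `<=` M].
have PP : forall u, P u -> exists M, Menger_subspace M /\ u `<=` M.
  by move=> u [].
have Pc : open_cover_of (f @^-1` [set y]) P.
  split; first by move=> u [].
  move=> x _; have [U [M [oU [MM [Ux UM]]]]] := lM x.
  by exists U => //; split => //; exists M.
case: H => [[_ _ clf Lf]|[_ _ bq]].
- have [V [cV [VP [_ Vc]]]] := Lf y P Pc.
  have [Z [MZ HZ]] := key _ _ _ _ cf cV (fun u Vu => PP u (VP u Vu)).
  pose O := \bigcup_(u in V) u.
  exists (~` (f @` (~` O))), Z; split.
    apply: closed_openC; apply: clf; apply: open_closedC.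
    by apply: bigcup_open => u Vu; have [] := VP u Vu.
  split => //; split.
    move=> [x nOx fx]; apply: nOx; exact: Vc.
  move=> w Hw; have [x fx] := sf w; apply: HZ; exists x => //.
  by apply: contrapT => nO; apply: Hw; exists x.
- have [V [W [fV VP oW Wy WV]]] := bq y P Pc.
  have [Z [MZ HZ]] := key _ _ _ _ cf (finite_set_countable fV) (fun u Vu => PP u (VP u Vu)).
  exists W, Z; split => //; split => //; split => //.
  move=> w /WV [u Vu [x ux <-]]; apply: HZ; exists x => //; by exists u.
Qed.
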